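(* Let $\mathcal{X},\mathcal{Y},\hat{\mathcal{X}}$ be finite sets with $T:=|\hat{\mathcal{X}}|$, let $p(y|x)p(x)$ be a joint distribution with $p(x)>0$ for all $x$, let $\beta>0$, and let $\big(p_\beta(y|\hat x),p_\beta(\hat x)\big)$ be an IB root at $\beta$ with no vanishing coordinates. Define the square matrix $S$ of order $T|\mathcal{Y}|$, with rows and columns indexed by pairs, by $$S_{(y,\hat x),(y',\hat x')}:=\sum_x p_\beta(x|\hat x)\Big[\beta\tfrac{p(y|x)}{p_\beta(y|\hat x)}+(1-2\beta)\Big]p(y'|x)\Big[\delta_{\hat x,\hat x'}-p_\beta(\hat x'|x)\Big].$$ Then $\dim\ker(I-S)=\dim\ker(I-J)$, where $J$ is the matrix defined in the context and $I$ denotes the identity of the respective order. Moreover, the map $\bm v=(v_{y,\hat x})_{y,\hat x}\mapsto(\bm v,\bm u)$ with $u_{\hat x}:=\frac{1-\beta}{\beta}\sum_y v_{y,\hat x}$ is a bijection from the set of left eigenvectors of $S$ for the eigenvalue $1$ (the left kernel of $I-S$) onto the left kernel of $I-J$.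
   Context: An IB root at $\beta$ is an encoder $p(\hat x|x)$, decoder $p(y|\hat x)$ and marginal $p(\hat x)$ with $p(\hat x|x)=\frac{p(\hat x)}{Z(x,\beta)}\exp\{-\beta D_{KL}[p(\cdot|x)\|p(\cdot|\hat x)]\}$, $Z(x,\beta)$ the normalizer, $p(y|\hat x)=\sum_x p(y|x)p(x|\hat x)$ where $p(x|\hat x)=p(\hat x|x)p(x)/p(\hat x)$, and $p(\hat x)=\sum_xp(\hat x|x)p(x)$; $p_\beta(\hat x|x)$, $p_\beta(x|\hat x)$ denote the encoder and inverse encoder of the given root; $\delta$ is the Kronecker delta. Define $A(\hat x,\hat x')=\sum_x p_\beta(\hat x'|x)p_\beta(x|\hat x)$, $B(\hat x,\hat x')_y=\sum_x p(y|x)p_\beta(\hat x'|x)p_\beta(x|\hat x)$, $C(\hat x,\hat x')_{y,y'}=\sum_x p(y|x)p(y'|x)p_\beta(\hat x'|x)p_\beta(x|\hat x)$. $J$ is the square matrix of order $T(|\mathcal{Y}|+1)$ with rows indexed by pairs $(y,\hat x)$ then indices $\hat x$, columns by $(y',\hat x')$ then $\hat x'$, with entries: row $(y,\hat x)$, column $(y',\hat x')$: $\beta\sum_{\hat x'',y''}(\delta_{\hat x'',\hat x'}-\delta_{\hat x,\hat x'})\big[1-\tfrac{\delta_{y'',y}}{p_\beta(y|\hat x)}\big]C(\hat x,\hat x'')_{y',y''}$; row $(y,\hat x)$, column $\hat x'$: $(1-\beta)\sum_{y''}\big[1-\tfrac{\delta_{y'',y}}{p_\beta(y|\hat x)}\big]B(\hat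 x,\hat x')_{y''}$; row $\hat x$, column $(y',\hat x')$: $\beta[\delta_{\hat x,\hat x'}p_\beta(y'|\hat x)-B(\hat x,\hat x')_{y'}]$; row $\hat x$, column $\hat x'$: $(1-\beta)[\delta_{\hat x,\hat x'}-A(\hat x,\hat x')]$. (This is the Jacobian of one Blahut–Arimoto IB iteration in log-decoder coordinates at the root.) The left kernel of a matrix $M$ is $\{\bm w:\bm w^{\top}M=0\}$. *)

(* Defs.v *)
From HB Require Import structures.
From mathcomp Require Import all_boot all_order all_algebra.
From mathcomp Require Import all_classical all_reals all_analysis.
Set Implicit Arguments. Unset Strict Implicit. Unset Printing Implicit Defensive.
Import Order.TTheory GRing.Theory Num.Theory.
Local Open Scope ring_scope.

Section IB.
Variables (R : realType) (X Y Xh : finType).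
(* py x y = p(y|x),  px x = p(x) *)
Variables (py : X -> Y -> R) (px : X -> R) (beta : R).
(* q xh x = p_beta(xh|x) (encoder), r xh y = p_beta(y|xh) (decoder),
   m xh = p_beta(xh) (marginal) *)
Variables (q : Xh -> X -> R) (r : Xh -> Y -> R) (m : Xh -> R).

Definition joint_distribution :=
  (forall x, 0 < px x) /\ \sum_x px x = 1 /\
  (forall x y, 0 <= py x y) /\ (forall x, \sum_y py x y = 1).

Definition KL (x : X) (xh : Xh) : R :=
  \sum_y (if py x y == 0 then 0 else py x y * ln (py x y / r xh y)).

Definition Zn (x : X) : R := \sum_xh m xh * expR (- beta * KL x xh).

(* inverse encoder p_beta(x|xh) = p_beta(xh|x) p(x) / p_beta(xh) *)
Definition pinv (x : X) (xh : Xh) : R := q xh x * px x / m xh.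

Definition IB_root :=
  (forall xh x, q xh x = m xh / Zn x * expR (- beta * KL x xh)) /\
  (forall xh y, r xh y = \sum_x py x y * pinv x xh) /\
  (forall xh, m xh = \sum_x q xh x * px x).

Definition no_vanishing := (forall xh y, 0 < r xh y) /\ (forall xh, 0 < m xh).

Definition Amat (xh xh' : Xh) : R := \sum_x q xh' x * pinv x xh.
Definition Bmat (xh xh' : Xh) (y : Y) : R := \sum_x py x y * q xh' x * pinv x xh.
Definition Cmat (xh xh' : Xh) (y y' : Y) : R :=
  \sum_x py x y * py x y' * q xh' x * pinv x xh.

Definition dlt {T : eqType} (a b : T) : R := if a == b then 1 else 0.

Definition Sfun (i j : Y * Xh) : R :=
  let: (y, xh) := i in let: (y', xh') := j in
  \sum_x pinv x xh * (beta * (py x y / r xh y) + (1 - 2 * beta))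
         * py x y' * (dlt xh xh' - q xh' x).

Definition Jfun (i j : (Y * Xh) + Xh) : R :=
  match i, j with
  | inl (y, xh), inl (y', xh') =>
      beta * \sum_xh'' \sum_y'' (dlt xh'' xh' - dlt xh xh')
             * (1 - dlt y'' y / r xh y) * Cmat xh xh'' y' y''
  | inl (y, xh), inr xh' =>
      (1 - beta) * \sum_y'' (1 - dlt y'' y / r xh y) * Bmat xh xh' y''
  | inr xh, inl (y', xh') =>
      beta * (dlt xh xh' * r xh y' - Bmat xh xh' y')
  | inr xh, inr xh' =>
      (1 - beta) * (dlt xh xh' - Amat xh xh')
  end.

Definition nS := #|{: Y * Xh}|.
Definition nJ := #|{: (Y * Xh) + Xh}|.

Definition Smx : 'M[R]_nS :=
  \matrix_(i, j) Sfun (enum_val i) (enum_val j).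
Definition Jmx : 'M[R]_nJ :=
  \matrix_(i, j) Jfun (enum_val i) (enum_val j).

Definition extend (v : 'rV[R]_nS) : 'rV[R]_nJ :=
  \row_k match enum_val k with
         | inl yxh => v 0 (enum_rank yxh)
         | inr xh => (1 - beta) / beta * \sum_y v 0 (enum_rank (y, xh))
         end.
End IB.

Definition left_kernel (R : fieldType) (n : nat) (M : 'M[R]_n) (w : 'rV[R]_n) : Prop :=
  w *m M = 0.

(* Main.v *)
Require Import Defs.
From HB Require Import structures.
From mathcomp Require Import all_boot all_order all_algebra.
From mathcomp Require Import all_classical all_reals all_analysis.
From mathcomp Require Import ring lra.
Import Order.TTheory GRing.Theory Num.Theory.
Local Open Scope ring_scope.

Section Aux.
Variable (R : realType).

Lemma sum_dltl (T : finType) (j : T) (F : T -> R) :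
  \sum_i dlt R i j * F i = F j.
Proof.
rewrite (bigD1 j) //= /dlt eqxx mul1r big1 ?addr0 // => i /negPf ->.
by rewrite mul0r.
Qed.

Lemma sum_dltr (T : finType) (j : T) (F : T -> R) :
  \sum_i dlt R j i * F i = F j.
Proof.
rewrite (bigD1 j) //= /dlt eqxx mul1r big1 ?addr0 // => i.
by rewrite eq_sym => /negPf ->; rewrite mul0r.
Qed.

Lemma sum_enum (T : finType) (F : T -> R) :
  \sum_(i < #|T|) F (enum_val i) = \sum_t F t.
Proof.
by rewrite [RHS](reindex (fun i : 'I_#|T| => enum_val i)) //; apply: onW_bij; apply: enum_val_bij.
Qed.



Lemma lker_fun (T : finType) (F : T -> T -> R) (v : 'rV[R]_#|T|) :
  v *m (1%:M - \matrix_(i, j) F (enum_val i) (enum_val j)) = 0 <->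
  forall j, v 0 (enum_rank j) = \sum_t v 0 (enum_rank t) * F t j.
Proof.
have E : forall j, (v *m \matrix_(i, j) F (enum_val i) (enum_val j)) 0 (enum_rank j)
   = \sum_t v 0 (enum_rank t) * F t j.
  move=> j; rewrite mxE -(@sum_enum T (fun t => v 0 (enum_rank t) * F t j)).
  by apply: eq_bigr => i _; rewrite mxE enum_valK enum_rankK.
rewrite mulmxBr mulmx1; split.
  move=> /eqP; rewrite subr_eq0 => /eqP {1}-> j.
  by rewrite E.
move=> H; apply/eqP; rewrite subr_eq0; apply/eqP/rowP => k.
by rewrite -(enum_valK k) H E.
Qed.

End Aux.

Section Main.
Variables (R : realType) (X Y Xh : finType).
Variables (py : X -> Y -> R) (px : X -> R) (beta : R).
Variables (q : Xh -> X -> R) (r : Xh -> Y -> R) (m : Xh -> R).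
Hypotheses (Hj : joint_distribution py px) (Hb : 0 < beta)
  (Hroot : IB_root py px beta q r m) (Hnv : no_vanishing r m).

Local Notation pv := (Defs.pinv px q m).
Local Notation A := (Amat px q m).
Local Notation B := (Bmat py px q m).
Local Notation dl := (dlt R).

Lemma F1 xh : \sum_x pv x xh = 1.
Proof.
rewrite /Defs.pinv -mulr_suml.
have [_ [_ H]] := Hroot; rewrite -H mulfV //.
by have [_ Hm] := Hnv; apply/lt0r_neq0.
Qed.

Lemma F2 x (xh0 : Xh) : \sum_xh q xh x = 1.
Proof.
have [Hq _] := Hroot.
under eq_bigr => xh _ do rewrite Hq mulrAC.
rewrite -mulr_suml; apply: divff.
rewrite /Zn; apply/lt0r_neq0.
rewrite (bigD1 xh0) //=.
have h1 : 0 < m xh0 * expR (- beta * KL py r x xh0).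
  by apply: mulr_gt0; [case: Hnv => _ ->|apply: expR_gt0].
have h2 : 0 <= \sum_(i | i != xh0) m i * expR (- beta * KL py r x i).
  apply: sumr_ge0 => i _; apply: mulr_ge0; last exact: expR_ge0.
  by case: Hnv => _ H; apply: ltW.
lra.
Qed.

Lemma F3 xh y : r xh y = \sum_x py x y * pv x xh.
Proof. by have [_ [H _]] := Hroot; apply: H. Qed.

Lemma F6 x : \sum_y py x y = 1.
Proof. by case: Hj => _ [_ [_ H]]; apply: H. Qed.

Lemma F4 xh : \sum_y r xh y = 1.
Proof.
under eq_bigr => y _ do rewrite F3.
rewrite exchange_big /= -[RHS](F1 xh); apply: eq_bigr => x _.
by rewrite -mulr_suml F6 mul1r.
Qed.

Lemma rne0 xh y : r xh y != 0.
Proof. by case: Hnv => H _; apply/lt0r_neq0. Qed.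

Lemma F5 xh y : \sum_x py x y * pv x xh / r xh y = 1.
Proof. by rewrite -mulr_suml -F3 divff // rne0. Qed.

Lemma sum_dltl' (T : finType) (j : T) (c : R) (F : T -> R) :
  \sum_i dl i j / c * F i = F j / c.
Proof.
under eq_bigr => i _ do rewrite mulrAC.
by rewrite -mulr_suml sum_dltl.
Qed.

Lemma SB xh xh' : \sum_y B xh xh' y = A xh xh'.
Proof.
rewrite /Bmat /Amat exchange_big; apply: eq_bigr => x _ /=.
transitivity ((\sum_y py x y) * (q xh' x * pv x xh)).
  by rewrite mulr_suml; apply: eq_bigr => y _; rewrite !mulrA.
by rewrite F6 mul1r.
Qed.

Lemma J1 y xh xh' : Jfun py px beta q r m (inl (y, xh)) (inr xh') =
  (1 - beta) * (A xh xh' - B xh xh' y / r xh y).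
Proof.
rewrite /=; congr (_ * _).
under eq_bigr => y'' _ do rewrite mulrBl mul1r.
by rewrite sumrB SB sum_dltl'.
Qed.

Lemma J2 y xh y' xh' : Jfun py px beta q r m (inl (y, xh)) (inl (y', xh')) =
  beta * \sum_x py x y' * pv x xh * (1 - py x y / r xh y) * (q xh' x - dl xh xh').
Proof.
rewrite /= /Cmat; congr (_ * _).
under eq_bigr => xh'' _ do under eq_bigr => y'' _ do rewrite mulr_sumr.
under eq_bigr => xh'' _ do rewrite exchange_big.
rewrite exchange_big; apply: eq_bigr => x _ /=.
transitivity (\sum_xh'' ((dl xh'' xh' - dl xh xh') * q xh'' x) *
   (py x y' * pv x xh * \sum_y'' (1 - dl y'' y / r xh y) * py x y'')).
  apply: eq_bigr => xh'' _; rewrite !mulr_sumr; apply: eq_bigr => y'' _.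
  rewrite /=; ring.
rewrite -mulr_suml.
under eq_bigr => i _ do rewrite mulrBl.
rewrite sumrB sum_dltl -mulr_sumr (F2 x xh).
under [X in _ * (_ * X)]eq_bigr => i _ do rewrite mulrBl mul1r.
rewrite sumrB F6 sum_dltl'; ring.
Qed.



Lemma bne0 : beta != 0.
Proof. exact: lt0r_neq0. Qed.

Lemma S_J y xh y' xh' : Sfun py px beta q r m (y, xh) (y', xh') =
  Jfun py px beta q r m (inl (y, xh)) (inl (y', xh')) +
  (1 - beta) / beta * Jfun py px beta q r m (inr xh) (inl (y', xh')).
Proof.
rewrite J2 /= mulrA divfK ?bne0 // /Bmat (F3 xh y').
rewrite [dl _ _ * _]mulr_sumr -sumrB !mulr_sumr -big_split /=.
apply: eq_bigr => x _; ring.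
Qed.

Lemma SS y xh xh' : \sum_y' Sfun py px beta q r m (y, xh) (y', xh') =
  dl xh xh' * (1 - beta) - beta * (B xh xh' y / r xh y) - (1 - 2 * beta) * A xh xh'.
Proof.
rewrite /Sfun exchange_big /=.
transitivity (\sum_x pv x xh * (beta * (py x y / r xh y) + (1 - 2 * beta)) * (dl xh xh' - q xh' x)).
  apply: eq_bigr => x _.
  transitivity ((\sum_y' py x y') * (pv x xh * (beta * (py x y / r xh y) + (1 - 2 * beta)) * (dl xh xh' - q xh' x))).
    by rewrite mulr_suml; apply: eq_bigr => y' _; ring.
  by rewrite F6 mul1r.
have e1 : dl xh xh' * (1 - beta) = \sum_x dl xh xh' * (beta * (py x y * pv x xh / r xh y) + (1 - 2 * beta) * pv x xh).
  by rewrite -mulr_sumr big_split /= -!mulr_sumr F5 F1; ring.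
rewrite e1 /Bmat /Amat mulr_suml !mulr_sumr -!sumrB; apply: eq_bigr => x _; ring.
Qed.

Lemma SJ2 y xh xh' : \sum_y' Jfun py px beta q r m (inl (y, xh)) (inl (y', xh')) =
  beta * (A xh xh' - B xh xh' y / r xh y).
Proof.
under eq_bigr => y' _ do rewrite J2.
rewrite -mulr_sumr exchange_big /=; congr (_ * _).
transitivity (\sum_x pv x xh * (1 - py x y / r xh y) * (q xh' x - dl xh xh')).
  apply: eq_bigr => x _.
  transitivity ((\sum_y' py x y') * (pv x xh * (1 - py x y / r xh y) * (q xh' x - dl xh xh'))).
    by rewrite mulr_suml; apply: eq_bigr => y' _; ring.
  by rewrite F6 mul1r.
have e1 : 0 = \sum_x dl xh xh' * (pv x xh - py x y * pv x xh / r xh y).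
  by rewrite -mulr_sumr sumrB F5 F1 subrr mulr0.
rewrite -[X in _ = X]subr0 [X in _ = _ - X]e1 /Bmat /Amat mulr_suml -!sumrB; apply: eq_bigr => x _; ring.
Qed.

Lemma SJ3 xh xh' : \sum_y' Jfun py px beta q r m (inr xh) (inl (y', xh')) =
  beta * (dl xh xh' - A xh xh').
Proof.
by rewrite /= -mulr_sumr sumrB -mulr_sumr F4 SB mulr1.
Qed.



Local Notation S_ := (Sfun py px beta q r m).
Local Notation J_ := (Jfun py px beta q r m).

Lemma sum_pair (F : Y * Xh -> R) : \sum_t F t = \sum_xh \sum_y F (y, xh).
Proof. by rewrite exchange_big pair_bigA; apply: eq_bigr => -[]. Qed.

Definition sv (vf : Y * Xh -> R) xh := \sum_y vf (y, xh).

Lemma sumv_pair (vf : Y * Xh -> R) (G : Xh -> R) :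
  \sum_t vf t * G t.2 = \sum_xh sv vf xh * G xh.
Proof.
rewrite sum_pair; apply: eq_bigr => xh _; rewrite /sv mulr_suml.
by apply: eq_bigr.
Qed.

Lemma keyl vf j : \sum_t vf t * S_ t j =
  \sum_t vf t * J_ (inl t) (inl j) +
  \sum_xh ((1 - beta) / beta * sv vf xh) * J_ (inr xh) (inl j).
Proof.
case: j => y' xh'.
transitivity (\sum_t (vf t * J_ (inl t) (inl (y', xh')) +
   vf t * ((1 - beta) / beta * J_ (inr t.2) (inl (y', xh'))))).
  by apply: eq_bigr => -[y xh] _; rewrite S_J /=; ring.
rewrite big_split /=; congr (_ + _).
rewrite (sumv_pair vf (fun xh => (1 - beta) / beta * J_ (inr xh) (inl (y', xh')))).
by apply: eq_bigr => xh _ /=; ring.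
Qed.

Definition EqS vf := forall j, vf j = \sum_t vf t * S_ t j.
Definition EqJl vf uf := forall j, vf j =
  \sum_t vf t * J_ (inl t) (inl j) + \sum_xh uf xh * J_ (inr xh) (inl j).
Definition EqJr vf uf := forall xh', uf xh' =
  \sum_t vf t * J_ (inl t) (inr xh') + \sum_xh uf xh * J_ (inr xh) (inr xh').

Lemma A_dir vf : EqS vf ->
  EqJl vf (fun xh => (1 - beta) / beta * sv vf xh) /\
  EqJr vf (fun xh => (1 - beta) / beta * sv vf xh).
Proof.
move=> H; split; first by move=> j; rewrite -keyl; apply: H.
move=> xh'.
set D := \sum_t vf t * dl t.2 xh'.
set VB := \sum_t vf t * (B t.2 xh' t.1 / r t.2 t.1).
set VA := \sum_t vf t * A t.2 xh'.
have hD : D = sv vf xh'.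
  by rewrite /D (sumv_pair vf (fun xh => dl xh xh')); under eq_bigr do rewrite mulrC; rewrite sum_dltl.
have hs : sv vf xh' = (1 - beta) * D - beta * VB - (1 - 2 * beta) * VA.
  rewrite {1}/sv.
  transitivity (\sum_y' \sum_t vf t * S_ t (y', xh')).
    by apply: eq_bigr => y' _; apply: H.
  rewrite exchange_big /D /VB /VA !mulr_sumr -!sumrB; apply: eq_bigr => -[y xh] _ /=.
  by rewrite -mulr_sumr SS; ring.
have h1 : \sum_t vf t * J_ (inl t) (inr xh') = (1 - beta) * VA - (1 - beta) * VB.
  rewrite /VA /VB !mulr_sumr -sumrB; apply: eq_bigr => -[y xh] _.
  by rewrite J1 /=; ring.
have h2 : \sum_xh (1 - beta) / beta * sv vf xh * J_ (inr xh) (inr xh') =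
   (1 - beta) / beta * (1 - beta) * (\sum_xh dl xh xh' * sv vf xh)
   - (1 - beta) / beta * (1 - beta) * (\sum_xh sv vf xh * A xh xh').
  by rewrite !mulr_sumr -sumrB; apply: eq_bigr => xh _ /=; ring.
rewrite h1 h2 sum_dltl -(sumv_pair vf (fun xh => A xh xh')) -/VA.
rewrite hD in hs.
apply/eqP; rewrite -subr_eq0.
set s := sv vf xh' in hs *.
have -> : (1 - beta) / beta * s - ((1 - beta) * VA - (1 - beta) * VB +
   ((1 - beta) / beta * (1 - beta) * s - (1 - beta) / beta * (1 - beta) * VA))
   = (1 - beta) / beta * (s - ((1 - beta) * s - beta * VB - (1 - 2 * beta) * VA)).
  by field; rewrite bne0.
by rewrite -hs subrr mulr0.
Qed.

Lemma B_dir vf uf : EqJl vf uf -> EqJr vf uf ->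
  (forall xh, uf xh = (1 - beta) / beta * sv vf xh) /\ EqS vf.
Proof.
move=> Hl Hr.
have hu : forall xh, uf xh = (1 - beta) / beta * sv vf xh.
  move=> xh'.
  set P := \sum_t vf t * (A t.2 xh' - B t.2 xh' t.1 / r t.2 t.1).
  set Q := \sum_xh uf xh * (dl xh xh' - A xh xh').
  have hs : sv vf xh' = beta * P + beta * Q.
    rewrite {1}/sv.
    transitivity (\sum_y' (\sum_t vf t * J_ (inl t) (inl (y', xh')) +
        \sum_xh uf xh * J_ (inr xh) (inl (y', xh')))).
      by apply: eq_bigr => y' _; apply: Hl.
    rewrite big_split /= exchange_big [X in _ + X]exchange_big /P /Q !mulr_sumr.
    congr (_ + _).
      by apply: eq_bigr => -[y xh] _ /=; rewrite -mulr_sumr SJ2; ring.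
    by apply: eq_bigr => xh _ /=; rewrite -mulr_sumr SJ3; ring.
  have hr : uf xh' = (1 - beta) * P + (1 - beta) * Q.
    rewrite Hr /P /Q !mulr_sumr; congr (_ + _).
      by apply: eq_bigr => -[y xh] _; rewrite J1 /=; ring.
    by apply: eq_bigr => xh _ /=; ring.
  by rewrite hr hs; field; rewrite bne0.
split=> // j.
rewrite keyl Hl; congr (_ + _); apply: eq_bigr => xh _.
by rewrite hu.
Qed.



Lemma kerS v : left_kernel (1%:M - Smx py px beta q r m) v <->
  EqS (fun t => v 0 (enum_rank t)).
Proof. exact: lker_fun. Qed.

Lemma kerJ w : left_kernel (1%:M - Jmx py px beta q r m) w <->
  EqJl (fun t => w 0 (enum_rank (inl t))) (fun xh => w 0 (enum_rank (inr xh))) /\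
  EqJr (fun t => w 0 (enum_rank (inl t))) (fun xh => w 0 (enum_rank (inr xh))).
Proof.
rewrite /left_kernel /Jmx; split.
  move/lker_fun => H; split => j; by rewrite H big_sumType.
move=> [Hl Hr]; apply/lker_fun => -[j|xh]; rewrite big_sumType; [apply: Hl|apply: Hr].
Qed.

Lemma ext_val (v : 'rV[R]_(nS Y Xh)) (t : ((Y * Xh) + Xh)%type) : (extend beta v) 0 (enum_rank t) =
  match t with inl a => v 0 (enum_rank a)
  | inr xh => (1 - beta) / beta * \sum_y v 0 (enum_rank (y, xh)) end.
Proof. by rewrite mxE enum_rankK. Qed.

Lemma part2 v : left_kernel (1%:M - Smx py px beta q r m) v ->
  left_kernel (1%:M - Jmx py px beta q r m) (extend beta v).
Proof.
move/kerS/A_dir => [Hl Hr]; apply/kerJ.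
have -> : (fun t => extend beta v 0 (enum_rank (inl t))) = (fun t => v 0 (enum_rank t)).
  by apply/funext => t; rewrite ext_val.
have -> : (fun xh => extend beta v 0 (enum_rank (inr xh))) =
   (fun xh => (1 - beta) / beta * sv (fun t => v 0 (enum_rank t)) xh).
  by apply/funext => xh; rewrite ext_val.
by split.
Qed.

Lemma part3 (v1 v2 : 'rV[R]_(nS Y Xh)) : extend beta v1 = extend beta v2 -> v1 = v2.
Proof.
move=> E; apply/rowP => k.
have := congr1 (fun w : 'rV[R]_(nJ Y Xh) => w 0 (enum_rank (inl (enum_val k)))) E.
by rewrite /= !ext_val enum_valK.
Qed.

Lemma part4 w : left_kernel (1%:M - Jmx py px beta q r m) w ->
  exists2 v, left_kernel (1%:M - Smx py px beta q r m) v & extend beta v = w.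
Proof.
move/kerJ => [Hl Hr]; have [hu HS] := B_dir _ _ Hl Hr.
exists (\row_k w 0 (enum_rank (inl (enum_val k)))).
  apply/kerS.
  have -> : (fun t => (\row_k w 0 (enum_rank (inl (enum_val k)))) 0 (enum_rank t))
     = (fun t => w 0 (enum_rank (inl t))).
    by apply/funext => t; rewrite mxE enum_rankK.
  exact: HS.
apply/rowP => k; rewrite -(enum_valK k) ext_val; case: (enum_val k) => [a|xh].
  by rewrite mxE enum_rankK.
rewrite hu /sv; congr (_ * _); apply: eq_bigr => y _.
by rewrite mxE enum_rankK.
Qed.

End Main.

Definition ext (R : realType) (Y Xh : finType) (beta : R)
  (v : 'rV[R]_(nS Y Xh)) : 'rV[R]_(nJ Y Xh) := extend beta v.

Lemma ext_lin (R : realType) (Y Xh : finType) (beta : R) :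
  linear (@ext R Y Xh beta).
Proof.
move=> a u v; apply/rowP => k; rewrite !mxE; case: (enum_val k) => [t|xh].
  by rewrite !mxE.
rewrite (eq_bigr (fun y => a * u 0 (enum_rank (y, xh)) + v 0 (enum_rank (y, xh)))).
  by rewrite big_split /= -mulr_sumr; ring.
by move=> y _; rewrite !mxE.
Qed.

HB.instance Definition _ (R : realType) (Y Xh : finType) (beta : R) :=
  GRing.isLinear.Build R _ _ _ (@ext R Y Xh beta) (@ext_lin R Y Xh beta).

Theorem lemma1 (R : realType) (X Y Xh : finType)
  (py : X -> Y -> R) (px : X -> R) (beta : R)
  (q : Xh -> X -> R) (r : Xh -> Y -> R) (m : Xh -> R) :
  joint_distribution py px ->
  0 < beta ->
  IB_root py px beta q r m ->
  no_vanishing r m ->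
  let S := Smx py px beta q r m in
  let J := Jmx py px beta q r m in
  \rank (kermx (1%:M - S)) = \rank (kermx (1%:M - J)) /\
  (forall v, left_kernel (1%:M - S) v ->
             left_kernel (1%:M - J) (extend beta v)) /\
  (forall v1 v2, left_kernel (1%:M - S) v1 -> left_kernel (1%:M - S) v2 ->
             extend beta v1 = extend beta v2 -> v1 = v2) /\
  (forall w, left_kernel (1%:M - J) w ->
             exists2 v, left_kernel (1%:M - S) v & extend beta v = w).
Proof.
move=> Hj Hb Hroot Hnv S J.
have P2 := @part2 _ _ _ _ _ _ _ _ _ _ Hj Hb Hroot Hnv.
have P4 := @part4 _ _ _ _ _ _ _ _ _ _ Hj Hb Hroot Hnv.
split; last first.
  split; first exact: P2.
  split; last exact: P4.
  by move=> v1 v2 _ _; apply: part3.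
pose E := lin1_mx (@ext R Y Xh beta).
have hE : forall v, v *m E = extend beta v := fun v => mul_rV_lin1 (@ext R Y Xh beta) v.
have e0 : extend beta (0 : 'rV[R]_(nS Y Xh)) = 0 := raddf0 (@ext R Y Xh beta).
have free : row_free E.
  rewrite -kermx_eq0; apply/eqP/row_matrixP => i; rewrite row0.
  have h : row i (kermx E) *m E = 0 by apply/sub_kermxP; exact: row_sub.
  rewrite hE -e0 in h; apply: part3; exact h.
rewrite -(mxrankMfree (kermx (1%:M - S)) free); apply/eqmx_rank/andP; split.
  apply/row_subP => i; rewrite row_mul hE; apply/sub_kermxP; apply: P2.
  by apply/sub_kermxP; exact: row_sub.
apply/row_subP => i.
have [v hv <-] := P4 (row i (kermx (1%:M - J))) (sub_kermxP (row_sub i _)).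
by rewrite -hE; apply: submxMr; apply/sub_kermxP.
Qed.
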